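(* Let $\psi$ be an $n$-dimensional unique sink orientation, run Algorithm 1 on $\psi$ from a starting vertex $v^0$, and let $\rho$ be the iteration in which it terminates. Then $\rho \leq |r_\psi(v^0)|$.
   Context: Let $Q^n = 2^{[n]}$ be the vertex set of the $n$-cube, with $u,v$ adjacent iff $|u\oplus v|=1$; faces are $F_{J,v}=\{u : v\oplus u\subseteq J\}$ for $J\subseteq[n]$. A unique sink orientation (USO) is an orientation of the cube's edges such that every nonempty face has a unique sink (vertex with no outgoing edges within the face). The outmap $s_\psi(v)$ is the set of coordinates $j$ such that the edge $\{v,v\oplus\{j\}\}$ is directed away from $v$. The reachmap is $r_\psi(v)=s_\psi(v)\cup\{j : \exists u \text{ reachable from } v \text{ by a directed path with } j\in s_\psi(u)\}$. Algorithm 1: given a starting vertex $v^0$, set $E^0=\emptyset$ and $j=0$; while $s_\psi(v^j)\neq\emptyset$: pick any $b\in s_\psi(v^j)$, let $v^{j+1}$ be the sink of the face $F_{E^j, v^j\oplus\{b\}}$ (computed by the Fibonacci Seesaw algorithm of Szabó and Welzl), set $E^{j+1}=E^j\cup\{b\}$ and $j\leftarrow j+1$. The algorithm terminates at iteration $\rho$ when $s_\psi(v^\rho)=\emptyset$. *)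

(* Defs.v *)
From mathcomp Require Import all_boot.
Set Implicit Arguments. Unset Strict Implicit. Unset Printing Implicit Defensive.

(* Vertices of Q^n: subsets of [n] = 'I_n. *)
Notation vtx n := {set 'I_n}.

Definition symd n (u v : vtx n) : vtx n := (u :\: v) :|: (v :\: u).

(* An orientation of the n-cube: [psi v j] says the edge {v, v (+) {j}}
   is directed away from v.  Consistency: each edge gets exactly one direction. *)
Definition orientation n (psi : vtx n -> 'I_n -> bool) : Prop :=
  forall v j, psi (symd v [set j]) j = ~~ psi v j.

Definition outmap n (psi : vtx n -> 'I_n -> bool) (v : vtx n) : vtx n :=
  [set j | psi v j].

Definition face n (J v : vtx n) : {set vtx n} := [set u | symd v u \subset J].

(* u is a sink of the face F_{J,v}: u in the face and no outgoing edge within it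
   (the edges of the face at u are exactly those in the directions of J). *)
Definition is_sink n (psi : vtx n -> 'I_n -> bool) (J v u : vtx n) : Prop :=
  u \in face J v /\ forall j, j \in J -> ~~ psi u j.

Definition USO n (psi : vtx n -> 'I_n -> bool) : Prop :=
  orientation psi /\ forall J v : vtx n, exists! u, is_sink psi J v u.

Definition dstep n (psi : vtx n -> 'I_n -> bool) : rel (vtx n) :=
  fun u w => [exists j, psi u j && (w == symd u [set j])].

Definition reachmap n (psi : vtx n -> 'I_n -> bool) (v : vtx n) : vtx n :=
  outmap psi v :|:
  [set j | [exists u, connect (dstep psi) v u && (j \in outmap psi u)]].

(* The sink of the
   face (computed by Fibonacci Seesaw) is described as the sink of the face. *)
Definition alg1_run n (psi : vtx n -> 'I_n -> bool) (v0 : vtx n)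
    (vs Es : nat -> vtx n) (rho : nat) : Prop :=
  [/\ vs 0 = v0, Es 0 = set0,
      (forall j, j < rho ->
         outmap psi (vs j) != set0 /\
         exists2 b, b \in outmap psi (vs j) &
           is_sink psi (Es j) (symd (vs j) [set b]) (vs j.+1) /\
           Es j.+1 = Es j :|: [set b])
    & outmap psi (vs rho) = set0].

(* Main.v *)
Require Import Defs.
From mathcomp Require Import all_boot.

Lemma in_symd n (u v : vtx n) x : (x \in symd u v) = ((x \in u) != (x \in v)).
Proof. by rewrite /symd !inE; case: (x \in u); case: (x \in v). Qed.

Lemma faceP n (J v u : vtx n) :
  reflect (forall x, x \notin J -> (x \in v) = (x \in u)) (u \in face J v).
Proof.
rewrite inE; apply: (iffP subsetP) => H x.
  move=> xJ; have := contra (H x) xJ; rewrite in_symd negbK => /eqP //.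
move=> xs; apply/negPn/negP => xJ; move: xs; by rewrite in_symd (H x xJ) eqxx.
Qed.

Lemma face_refl n (J v : vtx n) : v \in face J v.
Proof. by apply/faceP. Qed.

Lemma sink_uniq n (psi : vtx n -> 'I_n -> bool) (U : USO psi) J v a b :
  is_sink psi J v a -> is_sink psi J v b -> a = b.
Proof.
case: U => _ Hu Ha Hb; have [t [_ Ht]] := Hu J v.
by rewrite -(Ht _ Ha) (Ht _ Hb).
Qed.

Lemma sink_reach n (psi : vtx n -> 'I_n -> bool) (U : USO psi) :
  forall k (J v u s : vtx n), #|J| = k -> u \in face J v ->
  is_sink psi J v s -> connect (dstep psi) u s.
Proof.
have U' := U; case: U' => Hor Huniq.
elim=> [|k IH] J v u s HJ Hu [Hs Hsink]; move/faceP: (Hu) => hu; move/faceP: (Hs) => hs.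
  have J0: J = set0 by apply/eqP; rewrite -cards_eq0 HJ.
  suff ->: u = s by apply: connect0.
  apply/setP=> x; have xJ : x \notin J by rewrite J0 inE.
  by rewrite -(hu x xJ) (hs x xJ).
have: 0 < #|J| by rewrite HJ.
case/card_gt0P => j jJ.
set J' := J :\ j.
have HJ' : #|J'| = k by move: HJ; rewrite (cardsD1 j J) jJ add1n => -[].
case Hj: ((j \in s) == (j \in u)).
  apply: (IH J' s u s HJ').
    apply/faceP => x; rewrite !inE negb_and negbK.
    case/orP => [/eqP->|xJ]; first by apply/eqP.
    by rewrite -(hs x xJ) (hu x xJ).
  split; first exact: face_refl.
  move=> i; rewrite inE => /andP[_ iJ]; exact: Hsink.
have [s1 [[Hs1 Hs1sink] _]] := Huniq J' u.
have c1 := IH J' u u s1 HJ' (face_refl _ _ _) (conj Hs1 Hs1sink).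
move/faceP: (Hs1) => hs1.
have hj1 : (j \in u) = (j \in s1) by apply: hs1; rewrite !inE eqxx.
have pj : psi s1 j.
  apply/negPn/negP => npj.
  have ss1: is_sink psi J v s1.
    split.
      apply/faceP => x xJ; rewrite (hu x xJ); apply: hs1.
      by rewrite inE negb_and xJ orbT.
    move=> i iJ; case: (eqVneq i j) => [->//|ij].
    by apply: Hs1sink; rewrite /J' !inE ij iJ.
  have e : s1 = s := @sink_uniq _ _ U _ _ _ _ ss1 (conj Hs Hsink).
  by move: Hj; rewrite -e hj1 eqxx.
set w := symd s1 [set j].
apply: connect_trans c1 _.
apply: (connect_trans (y:=w)).
  by apply: connect1; apply/existsP; exists j; rewrite pj /w eqxx.
apply: (IH J' s w s HJ').
  apply/faceP => x; rewrite !inE negb_and negbK => /orP[/eqP->|xJ].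
    rewrite eqxx /= andbT.
    by move: Hj; rewrite -hj1; case: (j \in s); case: (j \in u).
  idtac.
  have xj : x != j by apply: contraNneq xJ => ->.
  have xJ' : x \notin J' by rewrite inE negb_and xJ orbT.
  rewrite xj (negbTE xj) andbF orbF /= -(hs1 x xJ') -(hs x xJ) (hu x xJ).
  by case: (x \in u).
split; first exact: face_refl.
move=> i; rewrite inE => /andP[_ iJ]; exact: Hsink.
Qed.

Theorem lemma18 (n : nat) (psi : {set 'I_n} -> 'I_n -> bool)
    (v0 : {set 'I_n}) (vs Es : nat -> {set 'I_n}) (rho : nat) :
  USO psi -> alg1_run psi v0 vs Es rho ->
  rho <= #|reachmap psi v0|.
Proof.
move=> U [H0 E0 Hstep Hend].
have U' := U; case: U' => Hor Huniq.
have inv: forall j, j <= rho -> [/\ (forall i, i \in Es j -> ~~ psi (vs j) i),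
   #|Es j| = j, Es j \subset reachmap psi v0 & connect (dstep psi) v0 (vs j)].
  elim=> [_|j IH Hj].
    rewrite E0 H0 cards0 sub0set; split; [by move=> i; rewrite inE | by [] | by [] | exact: connect0].
  have [I1 I2 I3 I4] := IH (ltnW Hj).
  have [_ [b bout [[Hf Hsk] Ees]]] := Hstep j Hj.
  rewrite inE in bout.
  have bE : b \notin Es j := contraL (I1 b) bout.
  have c : connect (dstep psi) v0 (vs j.+1).
    apply: connect_trans I4 _.
    apply: (connect_trans (y := symd (vs j) [set b])).
      by apply: connect1; apply/existsP; exists b; rewrite bout eqxx.
    exact: (@sink_reach _ _ U _ _ _ _ _ (erefl _) (face_refl _ _ _) (conj Hf Hsk)).
  split.
  - move=> i; rewrite Ees in_setU in_set1 => /orP[iE|/eqP ->]; first exact: Hsk.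
    apply/negP => pb.
    have [t [[Ht Htsink] _]] := Huniq (Es j :|: [set b]) (vs j).
    move/faceP: (Ht) => ht.
    have bin : b \in Es j :|: [set b] by rewrite in_setU in_set1 eqxx orbT.
    case: (boolP (b \in symd (vs j) t)) => bt.
      have st : is_sink psi (Es j) (symd (vs j) [set b]) t.
        split; last by move=> k kE; apply: Htsink; rewrite in_setU kE.
        apply/faceP => x xE; rewrite in_symd in_set1.
        case: (eqVneq x b) => [->|xb].
          by move: bt; rewrite in_symd; case: (b \in vs j); case: (b \in t).
        rewrite /= -ht //; last by rewrite in_setU in_set1 negb_or xE xb.
        by case: (x \in vs j).
      have e := @sink_uniq _ _ U _ _ _ _ st (conj Hf Hsk).
      by move: (Htsink b bin); rewrite e pb.
    have st : is_sink psi (Es j) (vs j) t.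
      split; last by move=> k kE; apply: Htsink; rewrite in_setU kE.
      apply/faceP => x xE; case: (eqVneq x b) => [->|xb].
        by move: bt; rewrite in_symd negbK => /eqP.
      by apply: ht; rewrite in_setU in_set1 negb_or xE xb.
    have e := @sink_uniq _ _ U _ _ _ _ st (conj (face_refl _ _ _) I1).
    by move: (Htsink b bin); rewrite e bout.
  - by rewrite Ees setUC cardsU1 bE I2.
  - rewrite Ees subUset I3 sub1set /=.
    apply/setUP; right; rewrite inE; apply/existsP; exists (vs j).
    by rewrite I4 inE.
  - exact: c.
have [_ I2 I3 _] := inv rho (leqnn _).
rewrite -{1}I2; exact: subset_leq_card I3.
Qed.
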